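(* Let $X=\{a_1,\dots,a_\ell\}$ be a finite set of $\ell$ distinct points, $N\ge2$, let $\gamma_*$ be an extreme point of $\mathcal{P}_{sym}(X^N)$ and let $\lambda=M_1\gamma_*$. Then: (a) $\gamma_*$ is the unique maximizer over $\gamma\in\mathcal{P}_{sym}(X^N)$ of $$C_\lambda[\gamma]=N^2\sum_{i=1}^\ell\lambda_i(M_1\gamma)_i+C_{GS}[\gamma];$$ (b) in particular, $\gamma_*$ is the unique maximizer of $C_{GS}[\gamma]$ over $\gamma\in\mathcal{P}_{sym}(X^N)$ subject to $M_1\gamma=\lambda$.
   Context: Probability measures on $X$ are identified with vectors $(\lambda_i)$, $\lambda_i=\lambda(\{a_i\})$. The symmetrization operator is $(S\gamma)(A_1\times\cdots\times A_N)=\frac1{N!}\sum_{\sigma\in S_N}\gamma(A_{\sigma(1)}\times\cdots\times A_{\sigma(N)})$; $\mathcal{P}_{sym}(X^N)$ is the set of probability measures $\gamma$ on $X^N$ with $S\gamma=\gamma$; $(M_1\gamma)(A)=\gamma(A\times X^{N-1})$. The Gangbo–Święch cost is $C_{GS}[\gamma]=\int_{X^N}\sum_{1\le i<j\le N}d(x_i,x_j)^p\,d\gamma(x_1,\dots,x_N)$ ($1\le p<\infty$), with $d$ the discrete metric $d(x,y)=1$ for $x\ne y$, $d(x,x)=0$. *)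

(* Defs.v *)
From HB Require Import structures.
From mathcomp Require Import all_boot all_order all_fingroup all_algebra.
From mathcomp Require Import reals exp.
Set Implicit Arguments. Unset Strict Implicit. Unset Printing Implicit Defensive.
Import Order.TTheory GRing.Theory Num.Theory.
Local Open Scope ring_scope.

Section Defs.
Variables (R : realType) (X : finType) (N : nat).

(* A (finite, hence discrete) measure on X^N, identified with its point masses
   gamma({(x_1,...,x_N)}). *)
Definition meas := {ffun N.-tuple X -> R}.

Definition is_prob (g : meas) : Prop :=
  (forall x, 0 <= g x) /\ \sum_x g x = 1.

Definition permt (s : 'S_N) (x : N.-tuple X) : N.-tuple X :=
  [tuple tnth x (s i) | i < N].

(* symmetrization operator S, evaluated on singletons
   {x_1} x ... x {x_N} (which determine the measure). *)
Definition symmetrize (g : meas) : meas :=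
  [ffun x => (N`!%:R)^-1 * \sum_(s : 'S_N) g (permt s x)].

Definition Psym (g : meas) : Prop := is_prob g /\ symmetrize g = g.

Definition M1 (g : meas) : {ffun X -> R} :=
  [ffun a => \sum_(x : N.-tuple X | ohead x == Some a) g x].

Definition extreme_Psym (g : meas) : Prop :=
  Psym g /\
  forall (g1 g2 : meas) (t : R), Psym g1 -> Psym g2 -> 0 < t < 1 ->
    (forall x, g x = t * g1 x + (1 - t) * g2 x) -> g1 = g /\ g2 = g.

Definition ddisc (x y : X) : R := if x == y then 0 else 1.

Definition CGS (p : R) (g : meas) : R :=
  \sum_x g x * \sum_(i < N) \sum_(j < N | (i < j)%N)
      powR (ddisc (tnth x i) (tnth x j)) p.

Definition Clam (p : R) (lam : {ffun X -> R}) (g : meas) : R :=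
  (N%:R ^+ 2) * \sum_a lam a * M1 g a + CGS p g.

End Defs.

(* Main.v *)
Require Import Defs.
From HB Require Import structures.
From mathcomp Require Import all_boot all_order all_fingroup all_algebra.
From mathcomp Require Import reals exp ring.
Set Implicit Arguments. Unset Strict Implicit. Unset Printing Implicit Defensive.
Import Order.TTheory GRing.Theory Num.Theory.
Local Open Scope ring_scope.

Section Aux.
Variables (R : realType) (X : finType) (N : nat).
Implicit Types (g : meas R X N) (x : N.-tuple X) (s : 'S_N).

Lemma permtM s t x : permt t (permt s x) = permt (t * s)%g x.
Proof. by apply: eq_from_tnth => i; rewrite !tnth_map !tnth_ord_tuple permM. Qed.

Lemma permt1 x : permt 1%g x = x.
Proof. by apply: eq_from_tnth => i; rewrite !tnth_map !tnth_ord_tuple perm1. Qed.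

Lemma permtK s x : permt s^-1%g (permt s x) = x.
Proof. by rewrite permtM mulVg permt1. Qed.

Lemma permt_inj s : injective (@permt X N s).
Proof. exact: can_inj (@permtK s). Qed.

Definition invar g := forall s x, g (permt s x) = g x.

Lemma Psym_invar g : Psym g -> invar g.
Proof.
move=> [_ H] s x; rewrite -[in LHS]H -[in RHS]H !ffunE; congr (_ * _).
under eq_bigr do rewrite permtM.
by symmetry; rewrite (reindex_inj (mulIg s)).
Qed.

Lemma invar_Psym g : is_prob g -> invar g -> Psym g.
Proof.
move=> Hp Hi; split => //; apply/ffunP => x; rewrite ffunE.
under eq_bigr do rewrite Hi.
rewrite sumr_const card_Sn -[g x *+ _]mulr_natr mulrCA mulVf ?mulr1 //.
by rewrite pnatr_eq0 -lt0n fact_gt0.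
Qed.

Lemma sum_invar g (h : N.-tuple X -> R) s : invar g ->
  \sum_x g x * h (permt s x) = \sum_x g x * h x.
Proof.
move=> Hi; under eq_bigr do rewrite -(Hi s).
by symmetry; rewrite (reindex_inj (@permt_inj s)).
Qed.


Definition cnt (a : X) x : R := \sum_(i < N) ((tnth x i == a)%:R).

Lemma cnt_permt a s x : cnt a (permt s x) = cnt a x.
Proof.
rewrite /cnt; under eq_bigr do rewrite tnth_map tnth_ord_tuple.
by symmetry; rewrite (reindex_inj (@perm_inj _ s)).
Qed.

Lemma cnt_count a x : cnt a x = (count_mem a x)%:R.
Proof.
rewrite /cnt -sum1_count big_tuple natr_sum [RHS]big_mkcond /=.
by apply: eq_bigr => i _; case: eqP.
Qed.

Lemma cnt_perm x y : (forall a, cnt a x = cnt a y) -> exists s, x = permt s y.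
Proof.
move=> H.
have : perm_eq x y.
  by apply/allP => a _; rewrite /= -(eqr_nat R) -!cnt_count H.
case/tuple_permP => s Hs; exists s; exact: val_inj.
Qed.

Lemma ohead_tnth (hN : (0 < N)%N) x : ohead x = Some (tnth x (Ordinal hN)).
Proof.
case: x => [[|y s] Hs]; first by exfalso; move: hN; rewrite -(eqP Hs).
by rewrite /= (tnth_nth y).
Qed.

Lemma M1E (hN : (0 < N)%N) g a : invar g ->
  N%:R * M1 g a = \sum_x g x * cnt a x.
Proof.
move=> Hi.
have -> : M1 g a = \sum_x g x * (tnth x (Ordinal hN) == a)%:R.
  rewrite /M1 ffunE big_mkcond; apply: eq_bigr => x _.
  by rewrite ohead_tnth; case: eqP => [[->]|H]; rewrite ?eqxx ?mulr1 //;
     case: eqP => [E|_]; rewrite ?mulr0 //; case: H; rewrite E.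
transitivity (\sum_(i < N) \sum_x g x * (tnth x (Ordinal hN) == a)%:R).
  by rewrite sumr_const card_ord mulr_natl.
transitivity (\sum_(i < N) \sum_x g x * (tnth x i == a)%:R).
  apply: eq_bigr => i _.
  rewrite -(sum_invar (fun x => (tnth x (Ordinal hN) == a)%:R) (tperm (Ordinal hN) i) Hi).
  by apply: eq_bigr => x _; rewrite tnth_map tnth_ord_tuple tpermL.
rewrite exchange_big; apply: eq_bigr => x _; by rewrite /cnt mulr_sumr.
Qed.


Definition Dx x (i j : 'I_N) : R := (tnth x i != tnth x j)%:R.

Lemma sumE x : \sum_(i < N) \sum_(j < N) Dx x i j = N%:R ^+ 2 - \sum_a cnt a x ^+ 2.
Proof.
have -> : \sum_a cnt a x ^+ 2 = \sum_(i < N) \sum_(j < N) (tnth x i == tnth x j)%:R.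
  transitivity (\sum_a \sum_(i < N) \sum_(j < N)
       ((tnth x i == a)%:R * (tnth x j == a)%:R : R)).
    apply: eq_bigr => a _; rewrite expr2 /cnt mulr_suml; apply: eq_bigr => i _.
    by rewrite mulr_sumr.
  rewrite exchange_big; apply: eq_bigr => i _; rewrite exchange_big.
  apply: eq_bigr => j _; rewrite (bigD1 (tnth x i)) //= big1 ?addr0.
    by rewrite eqxx mul1r eq_sym.
  by move=> a /negPf Ha; rewrite eq_sym Ha mul0r.
apply/eqP; rewrite eq_sym subr_eq -big_split /=.
rewrite (eq_bigr (fun _ => N%:R)).
  by rewrite sumr_const card_ord expr2 mulr_natr.
move=> i _; rewrite -big_split /= (eq_bigr (fun _ => 1)).
  by rewrite sumr_const card_ord.
by move=> j _; rewrite /Dx; case: eqP; rewrite ?add0r ?addr0.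
Qed.

Lemma sum_tri x : \sum_(i < N) \sum_(j < N) Dx x i j =
  (\sum_(i < N) \sum_(j < N | (i < j)%N) Dx x i j) * 2.
Proof.
have H : \sum_(i < N) \sum_(j < N | (i < j)%N) Dx x i j =
          \sum_(i < N) \sum_(j < N | ~~ (i < j)%N) Dx x i j.
  rewrite [LHS](eq_bigr (fun i : 'I_N => \sum_(j < N) if (i < j)%N then Dx x i j else 0));
    last by move=> i _; rewrite big_mkcond.
  rewrite [RHS](eq_bigr (fun i : 'I_N => \sum_(j < N) if ~~ (i < j)%N then Dx x i j else 0));
    last by move=> i _; rewrite big_mkcond.
  rewrite [RHS]exchange_big /=.
  apply: eq_bigr => i _; apply: eq_bigr => j _.
  case: (ltngtP i j) => h.
  - by rewrite /Dx eq_sym.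
  - by [].
  - by rewrite /Dx (ord_inj h) eqxx.
transitivity (\sum_(i < N) \sum_(j < N | (i < j)%N) Dx x i j +
              \sum_(i < N) \sum_(j < N | (i < j)%N) Dx x i j); last by ring.
rewrite {2}H -big_split /=.
by apply: eq_bigr => i _; rewrite (bigID (fun j : 'I_N => (i < j)%N)).
Qed.


Lemma CGSE p g : 1 <= p ->
  CGS p g = \sum_x g x * ((N%:R ^+ 2 - \sum_a cnt a x ^+ 2) / 2).
Proof.
move=> hp; have p0 : p != 0 by rewrite gt_eqF // (lt_le_trans ltr01 hp).
rewrite /CGS; apply: eq_bigr => x _; congr (_ * _).
rewrite -sumE sum_tri mulfK ?pnatr_eq0 //.
apply: eq_bigr => i _; apply: eq_bigr => j _.
by rewrite /Dx /ddisc; case: eqP => _; rewrite ?powR0 ?powR1.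
Qed.

Definition Cl x0 x := [forall a, cnt a x == cnt a x0].

Lemma Cl_permt x0 s x : Cl x0 (permt s x) = Cl x0 x.
Proof. by apply: eq_forallb => a; rewrite cnt_permt. Qed.

Lemma Cl_refl x0 : Cl x0 x0.
Proof. by apply/forallP => a. Qed.

Lemma supp_const g x0 : is_prob g -> invar g -> (forall x, ~~ Cl x0 x -> g x = 0) ->
  (forall x, g x = g x0 * (Cl x0 x)%:R) /\
  g x0 * (\sum_x ((Cl x0 x)%:R : R)) = 1.
Proof.
move=> [_ Hs] Hi H0.
have E : forall x, g x = g x0 * (Cl x0 x)%:R.
  move=> x; case: (boolP (Cl x0 x)) => Hx; last by rewrite H0 // mulr0.
  rewrite mulr1; have [s ->] : exists s, x = permt s x0.
    by apply: cnt_perm => a; apply/eqP; move/forallP: Hx.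
  exact: Hi.
split => //; rewrite mulr_sumr -[X in _ = X]Hs; apply: eq_bigr => x _.
by rewrite -E.
Qed.

Lemma supp_uniq g1 g2 x0 : is_prob g1 -> invar g1 -> (forall x, ~~ Cl x0 x -> g1 x = 0) ->
  is_prob g2 -> invar g2 -> (forall x, ~~ Cl x0 x -> g2 x = 0) -> g1 = g2.
Proof.
move=> P1 I1 Z1 P2 I2 Z2.
have [E1 S1] := supp_const P1 I1 Z1; have [E2 S2] := supp_const P2 I2 Z2.
have k0 : \sum_x ((Cl x0 x)%:R : R) != 0.
  by apply/eqP => k0; move: S1; rewrite k0 mulr0 => /eqP; rewrite eq_sym oner_eq0.
have e : g1 x0 = g2 x0 by apply: (mulIf k0); rewrite S1 S2.
by apply/ffunP => x; rewrite E1 E2 e.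
Qed.


Lemma extreme_supp (gs : meas R X N) : extreme_Psym gs ->
  exists x0, 0 < gs x0 /\ forall x, ~~ Cl x0 x -> gs x = 0.
Proof.
move=> [[[Hge Hs] Hsym] Hext].
have Hi : invar gs by apply: Psym_invar.
have [x0 Hx0] : exists x0, 0 < gs x0.
  case: (pickP (fun x => 0 < gs x)) => [x0 H|H]; first by exists x0.
  exfalso; move: Hs; rewrite big1 => [/eqP|x _]; first by rewrite eq_sym oner_eq0.
  by apply/eqP; rewrite eq_le Hge andbT leNgt H.
exists x0; split => //.
set t := \sum_(x | Cl x0 x) gs x.
set u := \sum_(x | ~~ Cl x0 x) gs x.
have tu : t + u = 1 by rewrite -Hs [RHS](bigID (Cl x0)).
have u0 : 0 <= u by apply: sumr_ge0.
have t0 : 0 < t.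
  rewrite /t (bigD1 x0) ?Cl_refl //=; apply: (lt_le_trans Hx0).
  by rewrite lerDl sumr_ge0.
case: (eqVneq u 0) => [uz|unz].
  by move=> x Hx; move/psumr_eq0P: uz; apply.
have u0' : 0 < u by rewrite lt_def unz u0.
exfalso.
pose g1 : meas R X N := [ffun x => if Cl x0 x then gs x / t else 0].
pose g2 : meas R X N := [ffun x => if Cl x0 x then 0 else gs x / u].
have P1 : Psym g1.
  apply: invar_Psym; last by move=> s x; rewrite !ffunE Cl_permt Hi.
  split; first by move=> x; rewrite ffunE; case: ifP => // _; rewrite divr_ge0 // ltW.
  rewrite (eq_bigr (fun x => (if Cl x0 x then gs x else 0) / t)); last first.
    by move=> x _; rewrite ffunE; case: ifP; rewrite ?mul0r.
  by rewrite -mulr_suml -big_mkcond /= mulfV // gt_eqF.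
have P2 : Psym g2.
  apply: invar_Psym; last by move=> s x; rewrite !ffunE Cl_permt Hi.
  split; first by move=> x; rewrite ffunE; case: ifP => // _; rewrite divr_ge0 // ltW.
  rewrite (eq_bigr (fun x => (if ~~ Cl x0 x then gs x else 0) / u)); last first.
    by move=> x _; rewrite ffunE; case: ifP; rewrite ?mul0r.
  by rewrite -mulr_suml -big_mkcond /= mulfV // gt_eqF.
have ht : 0 < t < 1.
  by rewrite t0 /= -tu ltrDl.
have [_ H2] : g1 = gs /\ g2 = gs.
  apply: (Hext g1 g2 t P1 P2 ht) => x; rewrite !ffunE -tu [t + u]addrC addrK.
  case: ifP => _; rewrite mulr0 ?addr0 ?add0r mulrCA mulfV ?mulr1 // gt_eqF //.
have := congr1 (fun f : meas R X N => f x0) H2; rewrite /= ffunE Cl_refl => E.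
by move: Hx0; rewrite -E ltxx.
Qed.

End Aux.

Unset Implicit Arguments.

Theorem corollary3p3 (R : realType) (X : finType) (N : nat) (p : R)
  (hN : (2 <= N)%N) (hp : 1 <= p) (gs : meas R X N) :
  extreme_Psym gs ->
  (forall g : meas R X N, Psym g -> g != gs ->
     Clam p (M1 gs) g < Clam p (M1 gs) gs) /\
  (forall g : meas R X N, Psym g -> M1 g = M1 gs -> g != gs ->
     CGS p g < CGS p gs).
Proof.
move=> Hext.
have hN0 : (0 < N)%N by apply: leq_trans hN.
have [x0 [Hx0 Z0]] := extreme_supp Hext.
have Pgs := Hext.1; have [Hprob _] := Pgs; have Igs := Psym_invar Pgs.
pose m a := cnt R a x0.
have Nz : (N%:R : R) != 0 by rewrite pnatr_eq0 -lt0n.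
have Hl : forall a, M1 gs a = m a / N%:R.
  move=> a; apply: (mulfI Nz); rewrite M1E // mulrCA mulfV // mulr1.
  transitivity (\sum_x gs x * m a).
    apply: eq_bigr => x _; case: (boolP (Cl R x0 x)) => H.
      by move/forallP: H => /(_ a)/eqP ->.
    by rewrite Z0 // !mul0r.
  by rewrite -mulr_suml Hprob.2 mul1r.
pose Q (x : N.-tuple X) := (\sum_a (cnt R a x - m a) ^+ 2) / 2.
pose Phi := (N%:R ^+ 2 + \sum_a m a ^+ 2) / 2.
have ClamE : forall g : meas R X N, Psym g -> Clam p (M1 gs) g = Phi - \sum_x g x * Q x.
  move=> g Pg; have [[Hge Hs] _] := Pg; have Ig := Psym_invar Pg.
  rewrite /Clam CGSE //.
  have -> : N%:R ^+ 2 * \sum_a M1 gs a * M1 g a = \sum_x g x * \sum_a m a * cnt R a x.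
    transitivity (\sum_a m a * (N%:R * M1 g a)).
      rewrite mulr_sumr; apply: eq_bigr => a _; by rewrite Hl; field.
    under eq_bigr => a _ do rewrite (M1E hN0 a Ig) mulr_sumr.
    rewrite exchange_big; apply: eq_bigr => x _; rewrite mulr_sumr.
    by apply: eq_bigr => a _; rewrite mulrCA.
  have -> : Phi = \sum_x g x * Phi by rewrite -mulr_suml Hs mul1r.
  rewrite -big_split /= -sumrB; apply: eq_bigr => x _.
  rewrite -mulrDr -mulrBr; congr (_ * _).
  have HD : \sum_a (cnt R a x - m a) ^+ 2 =
     \sum_a cnt R a x ^+ 2 - (\sum_a m a * cnt R a x) *+ 2 + \sum_a m a ^+ 2.
    rewrite -sumrMnl -sumrB -big_split /=; apply: eq_bigr => a _; ring.
  by rewrite /Q /Phi HD; field.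
have Q0 : forall y, 0 <= Q y.
  move=> y; rewrite /Q divr_ge0 //; apply: sumr_ge0 => a _; exact: sqr_ge0.
have QC : forall x, Q x = 0 -> Cl R x0 x.
  move=> x /eqP; rewrite /Q mulf_eq0 invr_eq0 pnatr_eq0 orbF => /eqP Hs0.
  apply/forallP => a; have /eqP : (cnt R a x - m a) ^+ 2 = 0.
    by apply: (psumr_eq0P _ Hs0) => // b _; exact: sqr_ge0.
  by rewrite sqrf_eq0 subr_eq0.
have Qgs : \sum_x gs x * Q x = 0.
  apply: big1 => x _; case: (boolP (Cl R x0 x)) => H; last by rewrite Z0 // mul0r.
  rewrite /Q big1 ?mul0r ?mulr0 // => a _.
  by move/forallP: H => /(_ a)/eqP ->; rewrite subrr expr0n.
have partA : forall g : meas R X N, Psym g -> g != gs ->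
    Clam p (M1 gs) g < Clam p (M1 gs) gs.
  move=> g Pg Hne; rewrite !ClamE // Qgs subr0 gtrBl.
  have [[Hge Hs] _] := Pg; have Ig := Psym_invar Pg.
  rewrite lt_def sumr_ge0 ?andbT; last by move=> x _; rewrite mulr_ge0.
  apply/eqP => S0'.
  have S0 := psumr_eq0P (fun x _ => mulr_ge0 (Hge x) (Q0 x)) S0'.
  have Zg : forall x, ~~ Cl R x0 x -> g x = 0.
    move=> x Hx; have /eqP := S0 x isT; rewrite mulf_eq0.
    case/orP => /eqP // /QC Hc; by rewrite Hc in Hx.
  move/eqP: Hne; apply.
  apply: (supp_uniq (x0 := x0)) => //; by [split|].
split => // g Pg HM Hne.
have := partA g Pg Hne; rewrite /Clam.
have -> : \sum_a M1 gs a * M1 g a = \sum_a M1 gs a * M1 gs a.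
  by rewrite HM.
by rewrite ltrD2l.
Qed.
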